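(* Let $d,k\ge1$ be integers, $c\in(0,\tfrac12)$, $\alpha>1$, $\varepsilon\ge0$, and let $\mathcal{A}$ be the set of all randomized algorithms whose outputs lie in $[c,1-c]^d$. Then \[ \mathrm{post}_{\mathcal{A},\alpha,k}(\varepsilon)\le R_\alpha\big(\mathrm{Bern}_k((c,\dots,c)),\mathrm{Bern}_k((1-c,\dots,1-c))\big)=dk\,r_\alpha(c). \]
   Context: For distributions $P,Q$ and $\alpha>1$, $R_\alpha(P,Q)=\frac{1}{\alpha-1}\log\int(dP/dQ)^\alpha dQ$ is the Rényi divergence of order $\alpha$, and $r_\alpha(p)=\frac{1}{\alpha-1}\log\left(p^\alpha(1-p)^{1-\alpha}+(1-p)^\alpha p^{1-\alpha}\right)$. Datasets are related by a symmetric neighboring relation $D\sim D'$; a randomized algorithm $A$ maps each dataset $D$ to a distribution $A(D)$; $\varepsilon_A(\alpha)=\sup_{D\sim D'}R_\alpha(A(D),A(D'))$. For $x\in[0,1]^d$, $\mathrm{Bern}(x)$ is the random vector in $\{0,1\}^d$ with independent coordinates, coordinate $i$ equal to $1$ with probability $x_i$; $\mathrm{Bern}_k(x)$ denotes $k$ independent runs of $\mathrm{Bern}(x)$. For a distribution $P$ on $[0,1]^d$, $\mathrm{Bern}_k(P)$ is the distribution of $\mathrm{Bern}_k(X)$ with $X\sim P$, and $\mathrm{Bern}_k(A)$ is the algorithm $D\mapsto\mathrm{Bern}_k(A(D))$. For a family $\mathcal{A}$ of algorithms with outputs in $[0,1]^d$, $\mathrm{post}_{\mathcal{A},\alpha,k}(\varepsilon)=\sup_{A\in\mathcal{A},\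 \varepsilon_A(\alpha)\le\varepsilon}\varepsilon_{\mathrm{Bern}_k(A)}(\alpha)$. *)

(* Defs.v *)
From HB Require Import structures.
From mathcomp Require Import all_boot all_order all_algebra.
From mathcomp Require Import all_classical all_reals all_analysis.
Import Order.TTheory GRing.Theory Num.Theory.
Local Open Scope classical_set_scope.
Local Open Scope ring_scope.
Local Open Scope charge_scope.

Section Defs.
Context {R : realType}.

Definition renyi {dT} {T : measurableType dT} (alpha : R)
    (P Q : probability T R) : \bar R :=
  if pselect (P `<< Q) is left _ then
    match (\int[Q]_x ((fine ((('d (charge_of_finite_measure P) '/d Q) x)))
                         `^ alpha)%:E)%E with
    | r%:E => ((alpha - 1)^-1 * ln r)%:E
    | +oo%E => +oo%E
    | -oo%E => -oo%E
    end
  else +oo%E.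

(* The same divergence for distributions on a finite set given by their
   probability mass functions: here dP/dQ = p/q, so the integral is
   \sum_y p(y)^alpha q(y)^(1-alpha). *)
Definition renyi_pmf {T : finType} (alpha : R) (p q : T -> R) : \bar R :=
  if `[< forall y, q y = 0 -> p y = 0 >] then
    ((alpha - 1)^-1 * ln (\sum_(y : T) p y `^ alpha * q y `^ (1 - alpha)))%:E
  else +oo%E.

Definition r_fun (alpha p : R) : R :=
  (alpha - 1)^-1 * ln (p `^ alpha * (1 - p) `^ (1 - alpha)
                       + (1 - p) `^ alpha * p `^ (1 - alpha)).

(* vectors in R^d are d-tuples; outputs of Bern_k are k runs of d bits *)
Definition bern_out (d k : nat) := {ffun 'I_k -> {ffun 'I_d -> bool}}.

Definition bern_pmf (d k : nat) (x : d.-tuple R) (y : bern_out d k) : R :=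
  \prod_(j < k) \prod_(i < d) (if y j i then tnth x i else 1 - tnth x i).

Definition bern_mix_pmf (d k : nat) (P : probability (d.-tuple R) R)
    (y : bern_out d k) : R :=
  fine (\int[P]_x (bern_pmf d k x y)%:E)%E.

Definition eps_alg {Dset : Type} (nb : Dset -> Dset -> Prop) (d : nat)
    (A : Dset -> probability (d.-tuple R) R) (alpha : R) : \bar R :=
  ereal_sup [set r | exists D D', nb D D' /\ r = renyi alpha (A D) (A D')].

Definition eps_bern_alg {Dset : Type} (nb : Dset -> Dset -> Prop) (d k : nat)
    (A : Dset -> probability (d.-tuple R) R) (alpha : R) : \bar R :=
  ereal_sup [set r | exists D D', nb D D' /\
      r = renyi_pmf alpha (bern_mix_pmf d k (A D)) (bern_mix_pmf d k (A D'))].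

Definition post {Dset : Type} (nb : Dset -> Dset -> Prop) (d k : nat)
    (F : set (Dset -> probability (d.-tuple R) R)) (alpha : R) (eps : \bar R)
    : \bar R :=
  ereal_sup [set eps_bern_alg nb d k A alpha
              | A in [set A | F A /\ (eps_alg nb d A alpha <= eps)%E]].

Definition cube (d : nat) (c : R) : set (d.-tuple R) :=
  [set x | forall i : 'I_d, c <= tnth x i <= 1 - c].

Definition algs_in_cube {Dset : Type} (d : nat) (c : R) :
    set (Dset -> probability (d.-tuple R) R) :=
  [set A | forall D, A D (cube d c) = 1%E].

Definition const_vec (d : nat) (a : R) : d.-tuple R := [tuple of nseq d a].

End Defs.

(* Main.v *)
Require Import Defs.
From HB Require Import structures.
From mathcomp Require Import all_boot all_order all_algebra.
From mathcomp Require Import all_classical all_reals all_analysis.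
From mathcomp Require Import ring lra.
Import Order.TTheory GRing.Theory Num.Theory.
Local Open Scope classical_set_scope.
Local Open Scope ring_scope.


Lemma powRE {R : realType} (x a : R) : 0 < x -> x `^ a = expR (a * ln x).
Proof. by move=> x0; rewrite /powR gt_eqF. Qed.

Lemma bern_exp {R : realType} (a z : R) : 1 < a -> a * expR z + 1 - a <= expR (a * z).
Proof.
move=> a1.
have a0 : 0 < a by lra.
have q0 : 0 < a / (a - 1) by rewrite divr_gt0 // subr_gt0.
have := @conjugate_powR R (expR z) 1 a (a / (a - 1)) (ltW (expR_gt0 z)) ler01 a0 q0.
rewrite invf_div powR1 mulr1 -expRM.
have E : a^-1 + (a - 1) / a = 1 by field; lra.
move=> /(_ E) H.
rewrite [a * z]mulrC.
set e := expR (z * a) in H *.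
have H2 : a * expR z <= a * (e / a + 1 * ((a - 1) / a)) by rewrite ler_pM2l.
have E1 : a * (e / a + 1 * ((a - 1) / a)) = e + (a - 1) by field; lra.
lra.
Qed.


Lemma tangent {R : realType} (a u v r : R) : 1 < a -> 0 < u -> 0 < v -> 0 < r ->
  a * r `^ (a - 1) * u + (1 - a) * r `^ a * v <= u `^ a * v `^ (1 - a).
Proof.
move=> a1 u0 v0 r0.
rewrite !powRE //.
set lu := ln u; set lv := ln v; set lr := ln r.
suff : a * expR ((a - 1) * lr) * expR lu + (1 - a) * expR (a * lr) * expR lv <= expR (a * lu) * expR ((1 - a) * lv).
  by rewrite /lu /lv !lnK ?posrE.
set z := lu - lv - lr.
set E := expR (a * lr + lv).
have E0 : 0 < E by apply: expR_gt0.
have h1 : expR ((a - 1) * lr) * expR lu = E * expR z.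
  by rewrite -!expRD; congr expR; rewrite /z; ring.
have h2 : expR (a * lr) * expR lv = E.
  by rewrite -!expRD.
have h3 : expR (a * lu) * expR ((1 - a) * lv) = E * expR (a * z).
  by rewrite -!expRD; congr expR; rewrite /z; ring.
have hb := @bern_exp R a z a1.
rewrite -mulrA h1 -mulrA h2 h3.
have : E * (a * expR z + 1 - a) <= E * expR (a * z) by rewrite ler_pM2l.
move: E0; set x := expR z; set y := expR (a * z); nra.
Qed.

Lemma tangent_eq {R : realType} (a P Q : R) : 0 < P -> 0 < Q ->
  a * (P / Q) `^ (a - 1) * P + (1 - a) * (P / Q) `^ a * Q = P `^ a * Q `^ (1 - a).
Proof.
move=> P0 Q0.
have r0 : 0 < P / Q by apply: divr_gt0.
rewrite !powRE // lnM ?posrE ?invr_gt0 // lnV ?posrE //.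
rewrite -{2}(lnK P0) -{3}(lnK Q0).
rewrite -!mulrA -!expRD.
have -> : (a - 1) * (ln P + - ln Q) + ln P = a * ln P + (1 - a) * ln Q by ring.
have -> : a * (ln P + - ln Q) + ln Q = a * ln P + (1 - a) * ln Q by ring.
ring.
Qed.


Lemma affine_box {R : realType} (c A B K S a b : R) : 0 < c ->
  c <= a <= 1 - c -> c <= b <= 1 - c ->
  A * c + B * c + K <= S -> A * c + B * (1 - c) + K <= S ->
  A * (1 - c) + B * c + K <= S -> A * (1 - c) + B * (1 - c) + K <= S ->
  A * a + B * b + K <= S.
Proof.
move=> c0 /andP[ha1 ha2] /andP[hb1 hb2] h1 h2 h3 h4.
have [A0|A0] := leP 0 A; have [B0|B0] := leP 0 B.
- have : A * a <= A * (1 - c) by rewrite ler_wpM2l.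
  have : B * b <= B * (1 - c) by rewrite ler_wpM2l.
  lra.
- have : A * a <= A * (1 - c) by rewrite ler_wpM2l.
  have : B * b <= B * c by rewrite ler_wnM2l // ltW.
  lra.
- have : A * a <= A * c by rewrite ler_wnM2l // ltW.
  have : B * b <= B * (1 - c) by rewrite ler_wpM2l.
  lra.
- have : A * a <= A * c by rewrite ler_wnM2l // ltW.
  have : B * b <= B * c by rewrite ler_wnM2l // ltW.
  lra.
Qed.

Definition hf {R : realType} (a u v : R) := u `^ a * v `^ (1 - a) + (1 - u) `^ a * (1 - v) `^ (1 - a).

Lemma powR_same {R : realType} (a x : R) : 0 <= x -> x `^ a * x `^ (1 - a) = x.
Proof.
move=> x0; rewrite -powRD; last by apply/implyP; rewrite subrKC oner_eq0.
by rewrite subrKC powRr1.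
Qed.

Lemma hf_diag {R : realType} (a x : R) : 0 <= x <= 1 -> hf a x x = 1.
Proof.
move=> /andP[x0 x1]; rewrite /hf !powR_same ?subr_ge0 //; ring.
Qed.

Lemma hf_ge1 {R : realType} (a c : R) : 1 < a -> 0 < c < 1 -> 1 <= hf a c (1 - c).
Proof.
move=> a1 /andP[c0 c1].
have c1' : 0 < 1 - c by rewrite subr_gt0.
have t1 := @tangent R a c (1 - c) 1 a1 c0 c1' ltr01.
have c0' : 0 < 1 - (1 - c) by rewrite subKr.
have t2 := @tangent R a (1 - c) (1 - (1 - c)) 1 a1 c1' c0' ltr01.
rewrite !powR1 !mulr1 in t1 t2.
rewrite /hf; lra.
Qed.


Lemma hf_le {R : realType} (a c u v : R) : 1 < a -> 0 < c -> c < 1 / 2 ->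
  c <= u <= 1 - c -> c <= v <= 1 - c -> hf a u v <= hf a c (1 - c).
Proof.
move=> a1 c0 c12 /andP[u1 u2] /andP[v1 v2].
have cc : c < 1 - c by lra.
have c1 : c < 1 by lra.
set S := hf a c (1 - c).
have S1 : 1 <= S by apply: hf_ge1 => //; rewrite c0.
pose r1 := u / v; pose r2 := (1 - u) / (1 - v).
have u0 : 0 < u by lra.
have v0 : 0 < v by lra.
have u0' : 0 < 1 - u by lra.
have v0' : 0 < 1 - v by lra.
have r10 : 0 < r1 by apply: divr_gt0.
have r20 : 0 < r2 by apply: divr_gt0.
pose A1 := a * r1 `^ (a - 1); pose B1 := (1 - a) * r1 `^ a.
pose A2 := a * r2 `^ (a - 1); pose B2 := (1 - a) * r2 `^ a.
have L : forall x y, 0 < x < 1 -> 0 < y < 1 ->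
    (A1 - A2) * x + (B1 - B2) * y + (A2 + B2) <= hf a x y.
  move=> x y /andP[x0 x1] /andP[y0 y1].
  have x0' : 0 < 1 - x by lra.
  have y0' : 0 < 1 - y by lra.
  have t1 := @tangent R a x y r1 a1 x0 y0 r10.
  have t2 := @tangent R a (1 - x) (1 - y) r2 a1 x0' y0' r20.
  rewrite /hf /A1 /B1 /A2 /B2.
  set p1 := r1 `^ (a - 1) in t1 *; set p2 := r1 `^ a in t1 *.
  set p3 := r2 `^ (a - 1) in t2 *; set p4 := r2 `^ a in t2 *.
  set g1 := x `^ a * y `^ (1 - a) in t1 *.
  set g2 := (1 - x) `^ a * (1 - y) `^ (1 - a) in t2 *.
  have e : (a * p1 - a * p3) * x + ((1 - a) * p2 - (1 - a) * p4) * y + (a * p3 + (1 - a) * p4)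
     = (a * p1 * x + (1 - a) * p2 * y) + (a * p3 * (1 - x) + (1 - a) * p4 * (1 - y)) by ring.
  rewrite e; lra.
have E : hf a u v = (A1 - A2) * u + (B1 - B2) * v + (A2 + B2).
  rewrite /hf -(@tangent_eq R a u v u0 v0) -(@tangent_eq R a (1 - u) (1 - v) u0' v0') /A1 /B1 /A2 /B2 -/r1 -/r2.
  ring.
rewrite E; apply: (@affine_box R c (A1 - A2) (B1 - B2) (A2 + B2) S u v c0); try (apply/andP; lra).
- apply: le_trans (L _ _ _ _) _; try (apply/andP; lra).
  by rewrite hf_diag //; apply/andP; lra.
- apply: le_trans (L _ _ _ _) _; try (apply/andP; lra).
  by [].
- apply: le_trans (L _ _ _ _) _; try (apply/andP; lra).
  by rewrite /hf /S /hf subKr addrC.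
- apply: le_trans (L _ _ _ _) _; try (apply/andP; lra).
  by rewrite hf_diag //; apply/andP; lra.
Qed.


Lemma powR_prod {R : realType} (I : Type) (r : seq I) (F : I -> R) (a : R) :
  (forall i, 0 <= F i) -> (\prod_(i <- r) F i) `^ a = \prod_(i <- r) F i `^ a.
Proof.
move=> F0; elim: r => [|h t IH]; first by rewrite !big_nil powR1.
by rewrite !big_cons powRM ?IH // prodr_ge0.
Qed.

Definition bsel {R : realType} (t : bool) (z : R) := if t then z else 1 - z.

Lemma bsel_ge0 {R : realType} t (z : R) : 0 <= z <= 1 -> 0 <= bsel t z.
Proof. by case/andP=> z0 z1; case: t => //=; rewrite subr_ge0. Qed.

Lemma sum_bern {R : realType} (d k : nat) (x x' : d.-tuple R) (a : R) :
  (forall i, 0 <= tnth x i <= 1) -> (forall i, 0 <= tnth x' i <= 1) ->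
  \sum_(y : bern_out d k) (bern_pmf d k x y) `^ a * (bern_pmf d k x' y) `^ (1 - a)
  = (\prod_(i < d) hf a (tnth x i) (tnth x' i)) ^+ k.
Proof.
move=> hx hx'.
pose G (i : 'I_d) (t : bool) := (bsel t (tnth x i)) `^ a * (bsel t (tnth x' i)) `^ (1 - a).
transitivity (\sum_(y : {ffun 'I_k -> {ffun 'I_d -> bool}}) \prod_(j < k) \prod_(i < d) G i (y j i)).
  apply: eq_bigr => y _.
  rewrite /bern_pmf !powR_prod; last 2 first.
  - by move=> j; apply: prodr_ge0 => i _; have := @bsel_ge0 R (y j i) _ (hx' i).
  - by move=> j; apply: prodr_ge0 => i _; have := @bsel_ge0 R (y j i) _ (hx i).
  rewrite -big_split; apply: eq_bigr => j _.
  rewrite !powR_prod; last 2 first.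
  - by move=> i; have := @bsel_ge0 R (y j i) _ (hx' i).
  - by move=> i; have := @bsel_ge0 R (y j i) _ (hx i).
  by rewrite -big_split.
rewrite -(bigA_distr_bigA (fun (j : 'I_k) (z : {ffun 'I_d -> bool}) => \prod_(i < d) G i (z i))) /=.
rewrite prodr_const card_ord; congr (_ ^+ _).
rewrite -(bigA_distr_bigA G) /=.
apply: eq_bigr => i _.
by rewrite big_bool /G /= /hf addrC.
Qed.



Lemma cube_meas {R : realType} (d : nat) (c : R) : measurable (cube d c).
Proof.
have -> : cube d c = \bigcap_(i in [set` enum 'I_d]) ((fun x : d.-tuple R => tnth x i) @^-1` `[c, 1 - c]).
  apply/seteqP; split => x /=.
    by move=> H i _ /=; rewrite in_itv /= H.
  by move=> H i; have := H i (mem_enum _ i); rewrite /= in_itv.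
rewrite bigcap_seq; apply: bigsetI_measurable => i _.
have := @measurable_tnth _ R d i measurableT _ (measurable_itv `[c, 1 - c]).
by rewrite setTI.
Qed.

Lemma meas_bern {R : realType} (d k : nat) (y : bern_out d k) :
  measurable_fun [set: d.-tuple R] (fun x => bern_pmf d k x y).
Proof.
apply: measurable_prod => j _; apply: measurable_prod => i _.
case: (y j i).
  exact: measurable_tnth.
apply: measurable_realfun.measurable_funB; first exact: measurable_cst.
exact: measurable_tnth.
Qed.

Lemma bern_pos {R : realType} (d k : nat) (c : R) (x : d.-tuple R) (y : bern_out d k) :
  0 < c -> cube d c x -> 0 < bern_pmf d k x y /\ bern_pmf d k x y <= 1.
Proof.
move=> c0 hx; split.
  apply: prodr_gt0 => j _; apply: prodr_gt0 => i _.
  have /andP[h1 h2] := hx i; case: (y j i); lra.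
apply: prodr_ile1 => j _; apply/andP; split.
  apply: prodr_ge0 => i _; have /andP[h1 h2] := hx i; case: (y j i); lra.
apply: prodr_ile1 => i _; apply/andP.
have /andP[h1 h2] := hx i; case: (y j i); split; lra.
Qed.


Lemma bdd_int {R : realType} dT (T : measurableType dT) (mu : probability T R) (D : set T)
  (g : T -> R) (K : R) : measurable D -> measurable_fun D g ->
  (forall x, D x -> `|g x| <= K) -> mu.-integrable D (EFin \o g).
Proof.
move=> mD mg hK; apply: measurable_bounded_integrable => //.
  by apply: le_lt_trans (probability_le1 mu mD) _; exact: ltry.
exists K; split; first by rewrite num_real.
move=> M KM x Dx /=; apply: le_trans (hK x Dx) _; exact: ltW.
Qed.

Lemma int_le_const {R : realType} dT (T : measurableType dT) (mu : probability T R) (D : set T)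
  (g : T -> R) (M : R) : measurable D -> mu D = 1%E ->
  mu.-integrable D (EFin \o g) -> (forall x, D x -> g x <= M) ->
  (\int[mu]_(x in D) (g x)%:E <= M%:E)%E.
Proof.
move=> mD muD ig hM.
apply: (@le_trans _ _ (\int[mu]_(x in D) (cst M%:E) x)%E).
  apply: le_integral => //.
    apply: (@bdd_int _ _ _ mu D (cst M) `|M|) => //; exact: measurable_cst.
  by move=> x /set_mem Dx; rewrite lee_fin hM.
rewrite integral_cst //; have key : forall z : \bar R, z = 1%E -> (M%:E * z <= M%:E)%E by move=> z ->; rewrite mule1. exact: (key _ muD).
Qed.

Lemma int_ge_const {R : realType} dT (T : measurableType dT) (mu : probability T R) (D : set T)
  (g : T -> R) (M : R) : measurable D -> mu D = 1%E ->
  mu.-integrable D (EFin \o g) -> (forall x, D x -> M <= g x) ->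
  (M%:E <= \int[mu]_(x in D) (g x)%:E)%E.
Proof.
move=> mD muD ig hM.
apply: (@le_trans _ _ (\int[mu]_(x in D) (cst M%:E) x)%E).
  rewrite integral_cst //; have key : forall z : \bar R, z = 1%E -> (M%:E <= M%:E * z)%E by move=> z ->; rewrite mule1.
  exact: (key _ muD).
apply: le_integral => //.
  apply: (@bdd_int _ _ _ mu D (cst M) `|M|) => //; exact: measurable_cst.
by move=> x /set_mem Dx; rewrite lee_fin hM.
Qed.

Lemma int_restrict {R : realType} dT (T : measurableType dT) (mu : probability T R) (D : set T)
  (g : T -> R) : measurable D -> mu D = 1%E -> measurable_fun setT g ->
  (\int[mu]_x (g x)%:E = \int[mu]_(x in D) (g x)%:E)%E.
Proof.
move=> mD muD mg.
rewrite [RHS]integral_mkcond; apply: (@ae_eq_integral _ _ _ mu setT) => //.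
- exact/measurable_realfun.measurable_EFinP.
- rewrite (restrict_EFin g D); apply/measurable_realfun.measurable_EFinP.
  apply/(measurable_restrictT _ mD); exact: measurable_funTS.
- exists (~` D); split.
  + exact: measurableC.
  + have h := probability_setC mu mD; rewrite muD subee // in h.
  + move=> x /= H Dx; apply: H => _.
    by rewrite patchE mem_set.
Qed.

Lemma int_bern {R : realType} (d k : nat) (c : R) (mu : probability (d.-tuple R) R)
  (y : bern_out d k) : 0 < c ->
  mu.-integrable (cube d c) (EFin \o (fun x => bern_pmf d k x y)).
Proof.
move=> c0.
have mf : measurable_fun (cube d c) (fun x => bern_pmf d k x y).
  exact: measurable_funTS (@meas_bern R d k y).
apply: (@bdd_int _ _ _ mu _ _ 1 (cube_meas d c) mf).
move=> x hx; have [h1 h2] := @bern_pos R d k c x y c0 hx.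
by rewrite ger0_norm // ltW.
Qed.

Lemma mix_props {R : realType} (d k : nat) (c : R) (mu : probability (d.-tuple R) R)
  (y : bern_out d k) : 0 < c -> mu (cube d c) = 1%E ->
  (\int[mu]_(x in cube d c) (bern_pmf d k x y)%:E)%E = (bern_mix_pmf d k mu y)%:E
  /\ 0 < bern_mix_pmf d k mu y.
Proof.
move=> c0 muC.
have E : (\int[mu]_(x in cube d c) (bern_pmf d k x y)%:E)%E = (bern_mix_pmf d k mu y)%:E.
  rewrite /bern_mix_pmf (@int_restrict _ _ _ mu (cube d c) (fun x => bern_pmf d k x y)) //.
  - rewrite fineK //; apply: integrable_fin_num; first exact: cube_meas.
    exact: int_bern.
  - exact: cube_meas.
  - exact: meas_bern.
split => //.
have m0 : 0 < \prod_(j < k) \prod_(i < d) c.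
  by apply: prodr_gt0 => j _; apply: prodr_gt0.
apply: lt_le_trans m0 _; rewrite -lee_fin -E.
apply: int_ge_const => //.
- exact: cube_meas.
- exact: int_bern.
- move=> x hx; apply: ler_prod => j _; apply/andP; split; first by apply: prodr_ge0 => i _; exact: ltW.
  apply: ler_prod => i _; apply/andP; split; first exact: ltW.
  have /andP[h1 h2] := hx i; case: (y j i) => /=; lra.
Qed.

Lemma lin_int {R : realType} (d k : nat) (c : R) (mu : probability (d.-tuple R) R)
  (C : bern_out d k -> R) : 0 < c -> mu (cube d c) = 1%E ->
  mu.-integrable (cube d c) (EFin \o (fun x => \sum_y C y * bern_pmf d k x y)) /\
  (\int[mu]_(x in cube d c) (\sum_y C y * bern_pmf d k x y)%:E)%E
    = (\sum_y C y * bern_mix_pmf d k mu y)%:E.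
Proof.
move=> c0 muC.
have eqf : (EFin \o (fun x => \sum_y C y * bern_pmf d k x y))
    = (fun x => \sum_y ((C y)%:E * (bern_pmf d k x y)%:E))%E.
  by apply/funext => x /=; rewrite -sumEFin; apply: eq_bigr => y _; rewrite EFinM.
have hi y : mu.-integrable (cube d c) (fun x => ((C y)%:E * (bern_pmf d k x y)%:E)%E).
  apply: (integrableZl (cube_meas d c)); exact: (@int_bern R d k c mu y c0).
split.
  by rewrite eqf; apply: (integrable_sum (cube_meas d c)) => y _; exact: hi.
have -> : (\int[mu]_(x in cube d c) (\sum_y C y * bern_pmf d k x y)%:E)%E
    = (\int[mu]_(x in cube d c) \sum_y ((C y)%:E * (bern_pmf d k x y)%:E))%E.
  by apply: eq_integral => x _; rewrite -sumEFin; apply: eq_bigr => y _; rewrite EFinM.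
have hs := integral_sum (cube_meas d c) hi (index_enum (bern_out d k)) xpredT.
rewrite /= in hs. rewrite hs.
rewrite -sumEFin; apply: eq_bigr => y _.
have hz := integralZl (cube_meas d c) (@int_bern R d k c mu y c0) (C y).
rewrite /= in hz; rewrite hz.
by rewrite (@mix_props R d k c mu y c0 muC).1 EFinM.
Qed.

Lemma core {R : realType} (d k : nat) (c a : R) (mu nu : probability (d.-tuple R) R) :
  0 < c -> c < 1 / 2 -> 1 < a -> mu (cube d c) = 1%E -> nu (cube d c) = 1%E ->
  \sum_(y : bern_out d k) (bern_mix_pmf d k mu y) `^ a * (bern_mix_pmf d k nu y) `^ (1 - a)
   <= (hf a c (1 - c) ^+ d) ^+ k.
Proof.
move=> c0 c12 a1 muC nuC.
have IP y := @mix_props R d k c mu y c0 muC.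
have IQ y := @mix_props R d k c nu y c0 nuC.
set P := bern_mix_pmf d k mu; set Q := bern_mix_pmf d k nu.
set f := fun (y : bern_out d k) (x : d.-tuple R) => bern_pmf d k x y.
pose A y := a * (P y / Q y) `^ (a - 1); pose B y := (1 - a) * (P y / Q y) `^ a.
have E1 : \sum_(y : bern_out d k) (P y) `^ a * (Q y) `^ (1 - a)
    = \sum_y (A y * P y) + \sum_y (B y * Q y).
  rewrite -big_split; apply: eq_bigr => y _.
  by rewrite -(@tangent_eq R a (P y) (Q y) (IP y).2 (IQ y).2).
set T := (hf a c (1 - c) ^+ d) ^+ k.
have cc : c <= 1 - c by lra.
have key : forall x x', cube d c x -> cube d c x' ->
    \sum_y A y * f y x + \sum_y B y * f y x' <= T.
  move=> x x' hx hx'.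
  rewrite -big_split.
  apply: (@le_trans _ _ (\sum_(y : bern_out d k) (f y x) `^ a * (f y x') `^ (1 - a))).
    apply: ler_sum => y _; rewrite /A /B.
    have [u0 _] := @bern_pos R d k c x y c0 hx.
    have [v0 _] := @bern_pos R d k c x' y c0 hx'.
    apply: tangent => //.
    by apply: divr_gt0; [exact: (IP y).2 | exact: (IQ y).2].
  have b01 : forall z : d.-tuple R, cube d c z -> forall i, 0 <= tnth z i <= 1.
    by move=> z hz i; have /andP[h1 h2] := hz i; apply/andP; split; lra.
  rewrite /f sum_bern; [|exact: b01|exact: b01].
  rewrite /T; apply: lerXn2r.
  - by rewrite nnegrE; apply: prodr_ge0 => i _; rewrite /hf addr_ge0 // mulr_ge0 // powR_ge0.
  - by rewrite nnegrE exprn_ge0 // /hf addr_ge0 // mulr_ge0 // powR_ge0.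
  rewrite -[d in _ ^+ d]card_ord -prodr_const.
  apply: ler_prod => i _; apply/andP; split.
    by rewrite /hf addr_ge0 // mulr_ge0 // powR_ge0.
  apply: hf_le => //.
have [iA IA] := @lin_int R d k c mu A c0 muC.
have [iB IB] := @lin_int R d k c nu B c0 nuC.
rewrite -/P in IA; rewrite -/Q in IB.
have step1 : forall x', cube d c x' ->
    \sum_y B y * bern_pmf d k x' y <= T - \sum_y A y * P y.
  move=> x' hx'.
  have h := @int_le_const R _ _ mu (cube d c) (fun x => \sum_y A y * bern_pmf d k x y)
     (T - \sum_y B y * bern_pmf d k x' y) (cube_meas d c) muC iA.
  rewrite IA lee_fin in h.
  suff : \sum_y A y * P y <= T - \sum_y B y * bern_pmf d k x' y by lra.
  apply: h => x hx.
  have := key x x' hx hx'; rewrite /f /=; lra.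
have step2 := @int_le_const R _ _ nu (cube d c) (fun x => \sum_y B y * bern_pmf d k x y)
     (T - \sum_y A y * P y) (cube_meas d c) nuC iB step1.
rewrite IB lee_fin in step2.
rewrite E1; lra.
Qed.

Lemma rhs_eq {R : realType} (d k : nat) (c a : R) : 0 < c -> c < 1 / 2 ->
  renyi_pmf a (bern_pmf d k (const_vec d c)) (bern_pmf d k (const_vec d (1 - c)))
  = ((a - 1)^-1 * ln ((hf a c (1 - c) ^+ d) ^+ k))%:E.
Proof.
move=> c0 c12.
have cx : cube d c (const_vec d c).
  by move=> i; rewrite tnth_nseq; apply/andP; split; lra.
have cx' : cube d c (const_vec d (1 - c)).
  by move=> i; rewrite tnth_nseq; apply/andP; split; lra.
rewrite /renyi_pmf asboolT; last first.
  move=> y h; have [h1 _] := @bern_pos R d k c _ y c0 cx'; lra.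
rewrite sum_bern; last 2 first.
- by move=> i; rewrite tnth_nseq; apply/andP; split; lra.
- by move=> i; rewrite tnth_nseq; apply/andP; split; lra.
congr (_ * ln (_ ^+ _))%:E.
rewrite -[d in RHS]card_ord -prodr_const; apply: eq_bigr => i _.
by rewrite !tnth_nseq.
Qed.

Lemma renyi_le {R : realType} (d k : nat) (c a : R) (mu nu : probability (d.-tuple R) R) :
  0 < c -> c < 1 / 2 -> 1 < a -> mu (cube d c) = 1%E -> nu (cube d c) = 1%E ->
  (renyi_pmf a (bern_mix_pmf d k mu) (bern_mix_pmf d k nu)
   <= renyi_pmf a (bern_pmf d k (const_vec d c)) (bern_pmf d k (const_vec d (1 - c))))%E.
Proof.
move=> c0 c12 a1 muC nuC.
rewrite rhs_eq //.
rewrite /renyi_pmf asboolT; last first.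
  move=> y h; have [_ h1] := @mix_props R d k c nu y c0 nuC; lra.
rewrite lee_fin; apply: ler_wpM2l.
  by rewrite invr_ge0; lra.
have hcore := @core R d k c a mu nu c0 c12 a1 muC nuC.
set s := \sum_y _ in hcore *.
have T1 : 1 <= (hf a c (1 - c) ^+ d) ^+ k.
  by apply: exprn_ege1; apply: exprn_ege1; apply: hf_ge1 => //; apply/andP; split; lra.
have s0 : 0 <= s by apply: sumr_ge0 => y _; apply: mulr_ge0; exact: powR_ge0.
have [s0'|s0'] := eqVneq s 0.
  by rewrite s0' ln0 // ln_ge0.
rewrite ler_ln // posrE; last by lra.
by rewrite lt_neqAle eq_sym s0' s0.
Qed.

Theorem theorem5 (R : realType) (Dset : Type) (nb : Dset -> Dset -> Prop)
  (nb_sym : forall D D', nb D D' -> nb D' D)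
  (d k : nat) (hd : (1 <= d)%N) (hk : (1 <= k)%N)
  (c alpha eps : R) (hc0 : 0 < c) (hc1 : c < 1 / 2) (halpha : 1 < alpha)
  (heps : 0 <= eps) :
  (post nb d k (algs_in_cube d c) alpha eps%:E
     <= renyi_pmf alpha (bern_pmf d k (const_vec d c))
                        (bern_pmf d k (const_vec d (1 - c))))%E
  /\ renyi_pmf alpha (bern_pmf d k (const_vec d c))
                     (bern_pmf d k (const_vec d (1 - c)))
     = ((d * k)%:R * r_fun alpha c)%:E.
Proof.
split.
  apply: ge_ereal_sup => _ [A [hA _] <-].
  apply: ge_ereal_sup => _ [D [D' [_ ->]]].
  exact: renyi_le.
rewrite rhs_eq //; congr EFin.
have S0 : 0 < hf alpha c (1 - c).
  apply: lt_le_trans (@hf_ge1 R alpha c halpha _); first exact: ltr01.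
  by apply/andP; split; lra.
rewrite !lnXn ?exprn_gt0 // /r_fun /hf subKr.
rewrite -mulrnA -mulr_natl; ring.
Qed.
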